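(* For all integers $n\ge1$ and $r\ge1$: (a) $\displaystyle\sum_{k=1}^{n}(2^k-1)\,\omega(n-k)=\sum_{\substack{m+k=n\\ m\ge1,\ k\ge0}}\Phi(m)\,\Omega_m(k)$; (b) $\displaystyle\sum_{k=1}^{n}\binom{k}{r}\omega(n-k)=\sum_{\substack{m+k=n\\ m\ge1,\ k\ge0}}\Phi_r(m)\,\Omega_m(k)$.
   Context: $\Phi(n)$ is the number of nonempty subsets $A\subseteq\{1,2,\dots,n\}$ with $\gcd(\gcd(A),n)=1$, and $\Phi_r(n)$ is the number of such subsets of cardinality $r$. $\omega:\mathbb{Z}\to\mathbb{Z}$ is defined by $\omega(0)=1$; $\omega(m)=(-1)^j$ if $m=\frac{3j^2\pm j}{2}$ for some integer $j\ge1$; $\omega(m)=0$ otherwise (in particular for $m<0$). For $m\ge1$ and integer $k$, $\Omega_m(k)=\sum_{j\ge0}\omega(k-jm)=\omega(k)+\omega(k-m)+\omega(k-2m)+\cdots$. *)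

(* Defs.v *)
From mathcomp Require Import all_boot all_order all_algebra.
Set Implicit Arguments. Unset Strict Implicit. Unset Printing Implicit Defensive.
Import GRing.Theory Num.Theory.
Local Open Scope ring_scope.

(* A subset A of {1,...,n} is encoded as A : {set 'I_n}, where i : 'I_n stands
   for the integer i+1. *)
Definition gcd_with (n : nat) (A : {set 'I_n}) : nat :=
  \big[gcdn/n]_(i in A) (i.+1)%N.

Definition Phi (n : nat) : nat :=
  #|[set A : {set 'I_n} | (A != set0) && (gcd_with A == 1)%N]|.

Definition Phi_r (r n : nat) : nat :=
  #|[set A : {set 'I_n} | (A != set0) && (gcd_with A == 1)%N && (#|A| == r)]|.

Definition is_pent (m : int) (j : nat) : bool :=
  (0 < j)%N && ((2 * m == (3 * j ^ 2 + j)%:Z) || (2 * m == (3 * j ^ 2 - j)%:Z)).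

Definition omega (m : int) : int :=
  if m == 0 then 1
  else if m < 0 then 0
  else match [pick j : 'I_(`|m|%N.+1) | is_pent m j] with
       | Some j => (-1) ^+ (nat_of_ord j)
       | None => 0
       end.

(* Omega_m(k) = sum_{j>=0} omega(k - j m); for m >= 1 only j <= |k| can
   contribute (if k < 0 all terms vanish). *)
Definition Omega (m : nat) (k : int) : int :=
  \sum_(j < `|k|%N.+1) omega (k - (j * m)%:Z).

(* Main.v *)
Require Import Defs.
From mathcomp Require Import all_boot all_order all_algebra zify.
Set Implicit Arguments. Unset Strict Implicit. Unset Printing Implicit Defensive.

Definition g0 n (A : {set 'I_n}) : nat := \big[gcdn/0]_(i in A) i.+1.

Lemma gcd_withE n (A : {set 'I_n}) : gcd_with A = gcdn (g0 A) n.
Proof.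
rewrite /gcd_with /g0.
elim/big_rec2: _ => [|i y1 y2 _ ->]; first by rewrite gcd0n.
by rewrite gcdnA.
Qed.

Lemma g0_dvd n (A : {set 'I_n}) (j : 'I_n) : j \in A -> g0 A %| j.+1.
Proof. by move=> jA; rewrite /g0 (bigD1 j) //= dvdn_gcdl. Qed.

Lemma gcd_with_pos n (A : {set 'I_n}) : 0 < n -> 0 < gcd_with A.
Proof. by move=> n0; rewrite gcd_withE gcdn_gt0 n0 orbT. Qed.

Lemma gcd_with_dvd n (A : {set 'I_n}) : gcd_with A %| n.
Proof. by rewrite gcd_withE dvdn_gcdr. Qed.

Lemma gcd_with_dvd_el n (A : {set 'I_n}) (j : 'I_n) : j \in A -> gcd_with A %| j.+1.
Proof. by move=> jA; rewrite gcd_withE (dvdn_trans (dvdn_gcdl _ _)) // g0_dvd. Qed.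

Section Scale.
Variables (k' d : nat).
Hypothesis (dk : d %| k'.+1).
Let g := k'.+1 %/ d.

Lemma d_pos : 0 < d.
Proof. rewrite lt0n; apply/eqP => d0; move: dk; by rewrite d0 dvd0n. Qed.

Lemma g_pos : 0 < g.
Proof. by rewrite /g divn_gt0 ?d_pos //; apply: dvdn_leq. Qed.

Lemma kE : k'.+1 = d * g.
Proof. by rewrite /g mulnC divnK. Qed.

Definition scf (i : 'I_d) : 'I_k'.+1 := inord ((i.+1) * g).-1.

Lemma scfS (i : 'I_d) : (scf i).+1 = i.+1 * g.
Proof.
have gp := g_pos.
have hk := kE.
rewrite /scf inordK.
  by rewrite prednK // muln_gt0 gp.
by rewrite prednK ?muln_gt0 ?gp // hk leq_mul2r ltn_ord orbT.
Qed.

Lemma scf_inj : injective scf.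
Proof.
move=> i j /(congr1 (fun x : 'I_k'.+1 => x.+1)); rewrite !scfS.
move/eqP; rewrite eqn_pmul2r ?g_pos // eqSS => /eqP h; exact: val_inj.
Qed.

Lemma g0_scale (B : {set 'I_d}) : g0 (scf @: B) = g0 B * g.
Proof.
rewrite /g0 big_imset; last by move=> x y _ _; apply: scf_inj.
rewrite (big_morph (fun x => x * g) (fun a b => muln_gcdl a b g) (mul0n g)).
by apply: eq_bigr => i _; rewrite scfS.
Qed.

Lemma gcd_with_scale (B : {set 'I_d}) : gcd_with (scf @: B) = gcd_with B * g.
Proof. by rewrite !gcd_withE g0_scale kE muln_gcdl. Qed.


Lemma imset_scf_eq0 (B : {set 'I_d}) : (scf @: B == set0) = (B == set0).
Proof. exact: imset_eq0. Qed.

End Scale.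

Definition TT (P : pred nat) d :=
  [set B : {set 'I_d} | (B != set0) && (gcd_with B == 1) && P #|B|].
Definition SS (P : pred nat) n d :=
  [set A : {set 'I_n} | (A != set0) && P #|A| && (n %/ gcd_with A == d)].

Lemma SS_eq (P : pred nat) k' d (dk : d %| k'.+1) :
  SS P k'.+1 d = [set [set @scf k' d i | i in B] | B : {set 'I_d} in TT P d].
Proof.
have gp := g_pos dk; have dp := d_pos dk; have hk := kE dk.
set g := k'.+1 %/ d in gp hk *.
apply/setP => A; rewrite inE; apply/idP/imsetP.
- move=> /andP[/andP[A0 PA] /eqP kd].
  have gAg : gcd_with A = g.
    have h1 := divnK (gcd_with_dvd A).
    rewrite kd in h1.
    apply/eqP; rewrite -(eqn_pmul2l dp) h1 -hk //.
  set B := [set i | @scf k' d i \in A].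
  have AE : A = @scf k' d @: B.
    apply/setP => j; apply/idP/imsetP.
    + move=> jA.
      have gj : g %| j.+1 by rewrite -gAg gcd_with_dvd_el.
      have qp : 0 < j.+1 %/ g by rewrite divn_gt0 // dvdn_leq.
      have qd : (j.+1 %/ g).-1 < d.
        by rewrite prednK // -(leq_pmul2r gp) divnK // -hk.
      have sj : @scf k' d (Ordinal qd) = j.
        apply: val_inj; apply: succn_inj; rewrite (scfS dk) /= -/g prednK // divnK //.
      by exists (Ordinal qd); rewrite ?inE sj.
    + by case=> i; rewrite inE => h ->.
  exists B => //.
  rewrite inE; apply/andP; split; [apply/andP; split|].
  + by move: A0; rewrite AE imset_eq0.
  + have := gcd_with_scale dk B; rewrite -AE gAg -/g => h.
    by rewrite -(eqn_pmul2r gp) mul1n -h.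
  + by rewrite -(card_imset _ (@scf_inj k' d dk)) -AE.
- case=> B; rewrite inE => /andP[/andP[B0 /eqP g1] PB] ->.
  have kg : k'.+1 %/ g = d by rewrite {1}hk mulnK.
  rewrite imset_eq0 B0 card_imset; last exact: scf_inj dk. rewrite PB (gcd_with_scale dk) g1 mul1n. by apply/eqP; exact: kg.
Qed.

Lemma sum_ind a b x (Q : pred nat) :
  \sum_(a <= i < b | Q i) (x == i : nat) = ((a <= x < b) && Q x).
Proof.
case: (boolP ((a <= x < b) && Q x)) => [/andP[hx hQ]|h].
- rewrite big_mkcond (bigD1_seq x) ?mem_index_iota ?iota_uniq //= hQ eqxx.
  rewrite big1 // => i /negbTE; rewrite eq_sym => ->; by case: (Q i).
- rewrite big1_seq // => i /andP[hQ]; rewrite mem_index_iota => hi.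
  by apply/eqP; rewrite eqb0; apply/eqP => xi; move: h; rewrite xi hi hQ.
Qed.

Lemma divsum (P : pred nat) k' :
  \sum_(1 <= d < k'.+2 | d %| k'.+1) #|TT P d| =
  #|[set A : {set 'I_k'.+1} | (A != set0) && P #|A|]|.
Proof.
set X := [set A : {set 'I_k'.+1} | (A != set0) && P #|A|].
transitivity (\sum_(1 <= d < k'.+2 | d %| k'.+1)
                \sum_(A in X) (k'.+1 %/ gcd_with A == d : nat)).
  apply: eq_bigr => d dk.
  rewrite -(card_imset _ (imset_inj (@scf_inj k' d dk))) -(SS_eq P dk).
  rewrite -sum1_card !big_mkcond /=; rewrite [RHS]big_mkcond /=. apply: eq_bigr => A _.
  rewrite !inE.
  by case: (A != set0); case: (P _); case: (_ == d).
rewrite exchange_big /= -sum1_card; apply: eq_bigr => A AX.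
rewrite sum_ind.
have gp : 0 < gcd_with A by apply: gcd_with_pos.
have gd := gcd_with_dvd A.
have h1 : 0 < k'.+1 %/ gcd_with A by rewrite divn_gt0 //; apply: dvdn_leq.
have h2 : k'.+1 %/ gcd_with A < k'.+2 by rewrite ltnS leq_div.
by rewrite (dvdn_div gd) h1 h2.
Qed.

Lemma Phi_sum k' : \sum_(1 <= d < k'.+2 | d %| k'.+1) Phi d = 2 ^ k'.+1 - 1.
Proof.
have -> : \sum_(1 <= d < k'.+2 | d %| k'.+1) Phi d =
          \sum_(1 <= d < k'.+2 | d %| k'.+1) #|TT predT d|.
  apply: eq_bigr => d _; rewrite /Phi /TT; apply: eq_card => A; by rewrite !inE andbT.
rewrite divsum.
have -> : [set A : {set 'I_k'.+1} | (A != set0) && predT #|A|] = [set~ set0].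
  by apply/setP => A; rewrite !inE andbT.
rewrite cardsC1 -cardsT -powersetT card_powerset cardsT card_ord.
by rewrite subn1.
Qed.

Lemma Phi_r_sum r k' : 0 < r ->
  \sum_(1 <= d < k'.+2 | d %| k'.+1) Phi_r r d = 'C(k'.+1, r).
Proof.
move=> r0.
have -> : \sum_(1 <= d < k'.+2 | d %| k'.+1) Phi_r r d =
          \sum_(1 <= d < k'.+2 | d %| k'.+1) #|TT (pred1 r) d|.
  apply: eq_bigr => d _; rewrite /Phi_r /TT; apply: eq_card => A; by rewrite !inE.
rewrite divsum.
have -> : [set A : {set 'I_k'.+1} | (A != set0) && pred1 r #|A|] = [set A : {set 'I_k'.+1} | #|A| == r].
  apply/setP => A; rewrite !inE /=.
  case: (boolP (A == set0)) => [/eqP ->|hA]; first by rewrite cards0 /=; case: r r0.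
  by [].
by rewrite card_draws card_ord.
Qed.

Section IntPart.
Import GRing.Theory Num.Theory.
Local Open Scope ring_scope.
Variable w : int -> int.
Hypothesis hw : forall x, x < 0 -> w x = 0.

Lemma HS (I : Type) (r : seq I) (P : pred I) (F : I -> nat) :
  (\sum_(i <- r | P i) F i)%N%:Z = \sum_(i <- r | P i) (F i)%:Z.
Proof. exact: (big_morph Posz PoszD erefl). Qed.

Lemma inner n m : (1 <= m)%N -> (m <= n)%N ->
  \sum_(j < `|n%:Z - m%:Z|.+1) w (n%:Z - m%:Z - (j * m)%:Z) =
  \sum_(1 <= k < n.+1 | (m %| k)%N) w (n%:Z - k%:Z).
Proof.
move=> m1 mn.
have -> : `|n%:Z - m%:Z|%N = (n - m)%N by rewrite subzn.
set N := (n - m)%N.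
transitivity (\sum_(j < N.+1) \sum_(1 <= k < n.+1 | (m %| k)%N)
                ((k == j.+1 * m)%N : nat)%:Z * w (n%:Z - k%:Z)).
  apply: eq_bigr => j _.
  transitivity (\sum_(1 <= k < n.+1 | (m %| k)%N)
                ((j.+1 * m == k)%N : nat)%:Z * w (n%:Z - (j.+1 * m)%:Z)).
    rewrite -mulr_suml -HS sum_ind dvdn_mull // andbT.
    have -> : n%:Z - m%:Z - (j * m)%:Z = n%:Z - (j.+1 * m)%:Z.
      by rewrite mulSn PoszD opprD addrA.
    case: (leqP (j.+1 * m) n) => h.
      by rewrite muln_gt0 m1 /= ltnS h mul1r.
    by rewrite hw ?mulr0 // subr_lt0 ltz_nat.
  apply: eq_bigr => k _.
  case: (eqVneq k (j.+1 * m)%N) => [->|ne]; first by [].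
  by rewrite !mul0r.
rewrite exchange_big /= big_nat_cond [RHS]big_nat_cond.
apply: eq_bigr => k /andP[/andP[k1 kn] mk].
rewrite -mulr_suml -HS.
set q := (k %/ m)%N.
have qm : (q * m = k)%N by rewrite divnK.
have q1 : (0 < q)%N by rewrite divn_gt0 // dvdn_leq.
have e : forall j : 'I_N.+1, (k == j.+1 * m)%N = (q.-1 == j)%N.
  move=> j; rewrite -qm eqn_pmul2r //.
  by case: (q) q1 => // q' _; rewrite eqSS.
under eq_bigr => j _ do rewrite e.
rewrite -(big_mkord xpredT (fun j => (q.-1 == j : nat))) sum_ind andbT.
have : (q.-1 < N.+1)%N.
  rewrite /N; move: kn; rewrite -qm ltnS => kn.
  have: (q <= n - m + 1)%N by nia.
  lia.
by move=> ->; rewrite mul1r.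
Qed.


Lemma gen n (F : nat -> nat) :
  \sum_(1 <= k < n.+1) (\sum_(1 <= d < k.+1 | (d %| k)%N) F d)%N%:Z * w (n%:Z - k%:Z) =
  \sum_(1 <= m < n.+1) (F m)%:Z *
     \sum_(j < `|n%:Z - m%:Z|.+1) w (n%:Z - m%:Z - (j * m)%:Z).
Proof.
transitivity (\sum_(1 <= m < n.+1) \sum_(1 <= k < n.+1 | (m %| k)%N)
                (F m)%:Z * w (n%:Z - k%:Z)); last first.
  rewrite big_nat_cond [RHS]big_nat_cond.
  apply: eq_bigr => m /andP[/andP[m1 mn] _].
  by rewrite inner // -?ltnS // mulr_sumr.
transitivity (\sum_(1 <= k < n.+1) \sum_(1 <= m < n.+1 | (m %| k)%N)
                (F m)%:Z * w (n%:Z - k%:Z)).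
  rewrite big_nat_cond [RHS]big_nat_cond.
  apply: eq_bigr => k /andP[/andP[k1 kn] _].
  rewrite HS mulr_suml [RHS](@big_cat_nat _ _ _ k.+1) //=.
  rewrite [X in _ = _ + X]big1_seq ?addr0 // => d /andP[dk].
  rewrite mem_index_iota => /andP[kd _].
  by move: (dvdn_leq k1 dk); rewrite leqNgt kd.
rewrite (exchange_big_dep_nat xpredT) //=.
Qed.

End IntPart.

Lemma main_a n : (1 <= n)%N ->
  (\sum_(1 <= k < n.+1) ((2 ^ k - 1)%N)%:Z * omega (n%:Z - k%:Z)
     = \sum_(1 <= m < n.+1) (Phi m)%:Z * Omega m (n%:Z - m%:Z))%R.
Proof.
move=> _.
have hw : forall x : int, (x < 0)%R -> omega x = 0%R.
  move=> x hx; rewrite /omega ifF ?hx //; apply/negbTE; by rewrite Num.Theory.ltr0_neq0.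
rewrite /Omega -(gen hw n Phi).
apply: eq_big_nat => k /andP[k1 _]; congr (_ * _)%R.
by case: k k1 => // k' _; rewrite Phi_sum.
Qed.

Lemma main_b n r : (1 <= n)%N -> (1 <= r)%N ->
  (\sum_(1 <= k < n.+1) ('C(k, r))%:Z * omega (n%:Z - k%:Z)
     = \sum_(1 <= m < n.+1) (Phi_r r m)%:Z * Omega m (n%:Z - m%:Z))%R.
Proof.
move=> _ r1.
have hw : forall x : int, (x < 0)%R -> omega x = 0%R.
  move=> x hx; rewrite /omega ifF ?hx //; apply/negbTE; by rewrite Num.Theory.ltr0_neq0.
rewrite /Omega -(gen hw n (Phi_r r)).
apply: eq_big_nat => k /andP[k1 _]; congr (_ * _)%R.
by case: k k1 => // k' _; rewrite Phi_r_sum.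
Qed.

Import GRing.Theory Num.Theory.
Local Open Scope ring_scope.

Theorem mainTheorem13 (n r : nat) (hn : (1 <= n)%N) (hr : (1 <= r)%N) :
  (\sum_(1 <= k < n.+1) ((2 ^ k - 1)%N)%:Z * omega (n%:Z - k%:Z)
     = \sum_(1 <= m < n.+1) (Phi m)%:Z * Omega m (n%:Z - m%:Z))
  /\
  (\sum_(1 <= k < n.+1) ('C(k, r))%:Z * omega (n%:Z - k%:Z)
     = \sum_(1 <= m < n.+1) (Phi_r r m)%:Z * Omega m (n%:Z - m%:Z)).
Proof.
split; [exact: main_a | exact: main_b].
Qed.
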